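(* Let $\mathcal{A}$ be a weakly irreducible $Z$-tensor of order $m$ and dimension $n$, written $\mathcal{A}=s\mathcal{I}-\mathcal{B}$ with $s>0$ and $\mathcal{B}$ nonnegative. Then: (1) $\mathbb{PV}_{\lambda_{\min}(\mathcal{A})}(\mathcal{A})$ is finite, i.e. $\mathcal{A}$ has finitely many eigenvectors (up to scalar) associated with $\lambda_{\min}(\mathcal{A})$; (2) $\mathbb{PV}_{\lambda_{\min}(\mathcal{A})}(\mathcal{A})$, with the quasi-Hadamard product $\circ$ described below, is an abelian group isomorphic to $\mathfrak{D}^{(0)}(\mathcal{A})$; (3) $s(\mathcal{A})=|\mathbb{PV}_{\lambda_{\min}(\mathcal{A})}(\mathcal{A})|$.
   Context: A real tensor $\mathcal{A}=(a_{i_1\cdots i_m})$ of order $m$ and dimension $n$ has real entries indexed by $[n]^m$. For $x\in\mathbb{C}^n$, $(\mathcal{A}x^{m-1})_i=\sum_{i_2,\dots,i_m}a_{ii_2\cdots i_m}x_{i_2}\cdots x_{i_m}$; $\mathcal{I}$ is the identity tensor. $\lambda$ is an eigenvalue with eigenvector $x\neq 0$ if $\mathcal{A}x^{m-1}=\lambda x^{[m-1]}$, $x^{[m-1]}=(x_i^{m-1})_i$. An H-eigenvalue is an eigenvalue with a real eigenvector; $\lambda_{\min}(\mathcal{A})$ denotes the least H-eigenvalue and $\rho(\cdot)$ the spectral radius. $\mathbb{PV}_\lambda(\mathcal{A})=\{x\in\mathbb{P}^{n-1}:\mathcal{A}x^{m-1}=\lambda x^{[m-1]}\}$. A $Z$-tensor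 is a real tensor with all off-diagonal entries nonpositive, i.e. $\mathcal{A}=s\mathcal{I}-\mathcal{B}$ with $s>0$, $\mathcal{B}\ge 0$. $\mathcal{A}$ is weakly irreducible if the directed graph on $[n]$ having an arc $i\to j$ ($j\ne i$) whenever $a_{ii_2\cdots i_m}\neq 0$ for some $(i_2,\dots,i_m)$ with $j\in\{i_2,\dots,i_m\}$ is strongly connected. For an invertible diagonal $D=\mathrm{diag}(d_1,\dots,d_n)$, $D^{-(m-1)}\mathcal{A}D$ has entries $d_{i_1}^{-(m-1)}a_{i_1\cdots i_m}d_{i_2}\cdots d_{i_m}$; $\mathfrak{D}^{(0)}(\mathcal{A})=\{D:\mathcal{A}=D^{-(m-1)}\mathcal{A}D,\ d_1=1\}$ (a group under matrix multiplication) and $s(\mathcal{A})=|\mathfrak{D}^{(0)}(\mathcal{A})|$ is the stabilizing index. Group structure: $\mathbb{PV}_{\lambda_{\min}(\mathcal{A})}(\mathcal{A})=\mathbb{PV}_{\rho(\mathcal{B})}(\mathcal{B})$, and since $\mathcal{B}$ is nonnegative weakly irreducible, it has a positive (Perron) eigenvector $v_p$ for $\rho(\mathcal{B})$, normalized with first entry $1$, and every $y$ in this eigenvariety may be represented with $y_1=1$, in which case $|y|=v_p$. Put $D_y=\mathrm{diag}(y_1/|y_1|,\dots,y_n/|y_n|)$ and $y\circ\hat y:=D_yD_{\hat y}v_p$. *)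

(* Defs.v *)
From HB Require Import structures.
From mathcomp Require Import all_boot all_order all_algebra.
From mathcomp Require Import complex.
From mathcomp Require Import boolp classical_sets functions cardinality reals.
Set Implicit Arguments. Unset Strict Implicit. Unset Printing Implicit Defensive.
Import Order.TTheory GRing.Theory Num.Theory.
Local Open Scope ring_scope.
Local Open Scope classical_set_scope.
Local Open Scope complex_scope.

(* Multi-indices (i_1,...,i_m) in [n]^m: position 0 of 'I_m is the index i_1. *)
Definition midx (m n : nat) := {ffun 'I_m -> 'I_n}.

Definition tensor (R : Type) (m n : nat) := {ffun midx m n -> R}.

Definition first_is m n (t : midx m n) (i : 'I_n) : bool :=
  [forall k : 'I_m, (val k == 0%N) ==> (t k == i)].

Definition id_tensor (R : nzRingType) m n : tensor R m n :=
  [ffun t : midx m n => if [forall k : 'I_m, forall l : 'I_m, t k == t l]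
                        then 1 else 0].

Definition tapply (R : rcfType) m n (A : tensor R m n) (x : 'rV[R[i]]_n)
  : 'rV[R[i]]_n :=
  \row_(i < n) \sum_(t : midx m n | first_is t i)
     ((A t)%:C * \prod_(k : 'I_m | val k != 0%N) x 0 (t k)).

Definition vpow (C : nzRingType) m n (x : 'rV[C]_n) : 'rV[C]_n :=
  \row_(i < n) (x 0 i) ^+ m.-1.

Definition is_eigenpair (R : rcfType) m n (A : tensor R m n)
  (lam : R[i]) (x : 'rV[R[i]]_n) : Prop :=
  x != 0 /\ tapply A x = lam *: vpow m x.

Definition is_eigenvalue (R : rcfType) m n (A : tensor R m n) (lam : R[i]) :=
  exists x, is_eigenpair A lam x.

Definition is_H_eigenvalue (R : rcfType) m n (A : tensor R m n) (lam : R[i]) :=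
  exists x, is_eigenpair A lam x /\ forall i, x 0 i \is Num.real.

Definition is_least_H_eigenvalue (R : rcfType) m n (A : tensor R m n)
  (lam : R[i]) :=
  is_H_eigenvalue A lam /\ forall mu, is_H_eigenvalue A mu -> lam <= mu.

Definition is_spectral_radius (R : rcfType) m n (A : tensor R m n) (r : R[i]) :=
  (exists mu, is_eigenvalue A mu /\ `|mu| = r) /\
  forall mu, is_eigenvalue A mu -> `|mu| <= r.

(* The point of P^{n-1} determined by a nonzero vector x: its class modulo
   nonzero complex scalars. *)
Definition pclass (C : fieldType) n (x : 'rV[C]_n) : set 'rV[C]_n :=
  [set y | exists c : C, c != 0 /\ y = c *: x].

Definition PV (R : rcfType) m n (A : tensor R m n) (lam : R[i])
  : set (set 'rV[R[i]]_n) :=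
  (@pclass _ n) @` [set x | is_eigenpair A lam x].

Definition tarc (R : nzRingType) m n (A : tensor R m n) : rel 'I_n :=
  fun i j => (j != i) && [exists t : midx m n,
     [&& first_is t i, A t != 0 & [exists k : 'I_m, (val k != 0%N) && (t k == j)]]].

Definition weakly_irreducible (R : nzRingType) m n (A : tensor R m n) : Prop :=
  forall i j : 'I_n, connect (tarc A) i j.

Definition tdiag_sim (R : rcfType) m n (A : tensor R m n) (D : 'M[R[i]]_n)
  : tensor R[i] m n :=
  [ffun t : midx m n => \sum_(i < n) (if first_is t i then
       (D i i) ^- m.-1 * (A t)%:C * \prod_(k : 'I_m | val k != 0%N) D (t k) (t k)
     else 0)].

Definition Dzero (R : rcfType) m n (A : tensor R m n.+1) : set 'M[R[i]]_n.+1 :=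
  [set D | [/\ is_diag_mx D, D \in unitmx, D 0 0 = 1 &
     [ffun t => (A t)%:C] = tdiag_sim A D]].

Definition Dvec (R : rcfType) n (y : 'rV[R[i]]_n) : 'M[R[i]]_n :=
  diag_mx (\row_i (y 0 i / `|y 0 i|)).

Definition qhprod (R : rcfType) n (vp y z : 'rV[R[i]]_n) : 'rV[R[i]]_n :=
  (Dvec y *m Dvec z *m vp^T)^T.

(* Main.v *)
Require Import Defs.
From HB Require Import structures.
From mathcomp Require Import all_boot all_order all_algebra.
From mathcomp Require Import complex.
From mathcomp Require Import boolp classical_sets functions cardinality reals.
From mathcomp Require Import lra ring.
Import Order.TTheory GRing.Theory Num.Theory.
Local Open Scope ring_scope.
Local Open Scope classical_set_scope.
Local Open Scope complex_scope.

Section Iso.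
Variable R : realType.
Local Notation C := R[i].
Local Notation re := (@complex.Re R).
Local Notation im := (@complex.Im R).

Definition sect (d : R) (z : C) :=
  re z ^+ 2 + im z ^+ 2 = 1 /\ im z <= 0 /\ 1 - re z <= d.

Lemma cpu (a b c d : R) : a^+2+b^+2 = 1 -> c^+2+d^+2= 1 ->
  1 - (a*c - b*d) <= 2*((1-a)+(1-c)).
Proof.
move=> h1 h2; have := sqr_ge0 (b - d); have := sqr_ge0 (a + c - 2); nra. Qed.

Lemma mono (a b c d : R) : a^+2+b^+2= 1 -> c^+2+d^+2= 1 -> 0<a -> 0<c -> d <= b ->
  d*a - c*b <= 0.
Proof.
move=> h1 h2 ha hc hdb.
have [hb|hb] := lerP 0 b; have [hd|hd] := lerP 0 d.
- have : c^+2 >= a^+2 by nra.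
  move=> hca; have : c >= a by nra. nra.
- nra.
- nra.
- have : c^+2 <= a^+2 by nra.
  move=> hca; have : c <= a by nra. nra.
Qed.

Lemma mulE (z w : C) : re (z * w) = re z * re w - im z * im w /\
   im (z * w) = re z * im w + im z * re w.
Proof. by case: z => a b; case: w => c d. Qed.

Lemma Ceq (z w : C) : re z = re w -> im z = im w -> z = w.
Proof. by case: z => a b; case: w => c d /= -> ->. Qed.

Lemma prod_sect (I : Type) (r : seq I) (F : I -> C) (d : R) :
  0 <= d -> (forall k, sect d (F k)) -> 4 ^+ size r * d <= 1 ->
  sect (4 ^+ size r * d) (\prod_(k <- r) F k).
Proof.
move=> d0 hF; elim: r => [|a r IH] hs.
  rewrite big_nil /sect /=; split; first by rewrite /= expr0n /= expr1n addr0.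
  by split => //; rewrite subrr expr0 mul1r.
rewrite big_cons /= /sect.
have hs' : 4 ^+ size r * d <= 1 / 4.
  by move: hs; rewrite /= exprS; lra.
case: IH => [|u1 [i1 c1]]; first lra; case: (hF a) => [u2 [i2 c2]].
case: (mulE (F a) (\prod_(j <- r) F j)) => -> ->.
set p := \prod_(j <- r) F j in u1 i1 c1 *.
have h4 : 0 <= 4 ^+ size r * d by rewrite mulr_ge0 // exprn_ge0.
have h5 : d <= 4 ^+ size r * d.
  by rewrite ler_peMl // exprn_ege1 // ler1n.
split; first nra.
split.
  have : 0 <= complex.Re p by lra.
  have : 0 <= complex.Re (F a) by lra.
  nra.
have := @cpu _ _ _ _ u2 u1. rewrite /= exprS. lra.
Qed.

Lemma prod_sect_one (I : eqType) (r : seq I) (F : I -> C) (d : R) :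
  0 <= d -> (forall k, sect d (F k)) -> 4 ^+ (size r).+1 * d <= 1 ->
  \prod_(k <- r) F k = 1 -> forall k, k \in r -> F k = 1.
Proof.
move=> d0 hF; elim: r => [|a r IH] hs hp k //.
rewrite big_cons in hp.
have hs' : 4 ^+ (size r).+1 * d <= 1 / 4.
  by move: hs; rewrite /= (exprS _ (size r).+1); lra.
have hs2 : 4 ^+ size r * d <= 1 / 16.
  by move: hs'; rewrite exprS; lra.
have hs3 : 4 ^+ size r * d <= 1 by lra.
have h5 : d <= 4 ^+ size r * d.
  by rewrite ler_peMl // exprn_ege1 // ler1n.
case: (@prod_sect _ r F d d0 hF hs3) => [u1 [i1 c1]]; case: (hF a) => [u2 [i2 c2]].
set p := \prod_(j <- r) F j in u1 i1 c1 hp.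
have [hre him] := mulE (F a) p.
rewrite hp /= in hre him.
have rp : 0 < complex.Re p by lra.
have ra : 0 < complex.Re (F a) by lra.
have ia : complex.Im (F a) = 0 by nra.
have ra1 : complex.Re (F a) = 1 by move: u2; rewrite ia; nra.
have Fa1 : F a = 1 by apply: Ceq; rewrite ?ra1 ?ia.
rewrite inE => /orP [/eqP ->|kr]; first exact: Fa1.
apply: IH => //; first lra.
by move: hp; rewrite Fa1 mul1r.
Qed.
End Iso.

Set Implicit Arguments. Unset Strict Implicit.

Section Tens.
Variable R : realType.
Local Notation C := R[i].
Variables m n : nat.
Local Notation N := n.+1.
Local Notation M := m.+1.

Definition prodv (x : 'I_N -> C) (t : midx M N) : C :=
  \prod_(k : 'I_M | val k != 0%N) x (t k).

Lemma first_isE (t : midx M N) i : first_is t i = (t ord0 == i).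
Proof.
apply/forallP/eqP => [h|<- k]; first by have /implyP := h ord0; move/(_ erefl)/eqP.
by apply/implyP => /eqP k0; apply/eqP; congr (t _); apply: val_inj.
Qed.

Lemma card_nz : #|[pred k : 'I_M | val k != 0%N]| = m.
Proof.
have -> : m = M.-1 by [].
rewrite -[in RHS](card_ord M) -(cardC1 (ord0 : 'I_M)).
apply: eq_card => k; rewrite !inE /=.
by congr negb; apply/eqP/eqP => [h|->//]; apply: val_inj.
Qed.

Lemma prodv_const (x : 'I_N -> C) (t : midx M N) i :
  (forall k, t k = i) -> prodv x t = x i ^+ m.
Proof.
move=> h; rewrite /prodv (eq_bigr (fun=> x i)) => [|k _]; last by rewrite h.
by rewrite prodr_const card_nz.
Qed.

Lemma prodvZ (c : C) (x : 'I_N -> C) t :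
  prodv (fun j => c * x j) t = c ^+ m * prodv x t.
Proof.
by rewrite /prodv big_split /= prodr_const card_nz.
Qed.

Lemma prodvM (x z : 'I_N -> C) t :
  prodv (fun j => x j * z j) t = prodv x t * prodv z t.
Proof. by rewrite /prodv big_split. Qed.

Lemma tapplyE (A : tensor R M N) x i :
  tapply A x 0 i = \sum_(t : midx M N | t ord0 == i) (A t)%:C * prodv (fun j => x 0 j) t.
Proof. by rewrite mxE; apply: eq_bigl => t; rewrite first_isE. Qed.

Lemma vpowE (x : 'rV[C]_N) i : vpow M x 0 i = x 0 i ^+ m.
Proof. by rewrite mxE. Qed.

Lemma id_const (t : midx M N) :
  id_tensor R M N t != 0 -> forall k, t k = t ord0.
Proof.
rewrite ffunE; case: ifP => [/forallP h _ k|]; last by rewrite eqxx.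
by have /forallP /(_ ord0) /eqP := h k.
Qed.

Lemma id_sum (x : 'I_N -> C) i :
  \sum_(t : midx M N | t ord0 == i) (id_tensor R M N t)%:C * prodv x t = x i ^+ m.
Proof.
pose t0 : midx M N := [ffun _ => i].
rewrite (bigD1 t0) /=; last by rewrite ffunE.
rewrite [X in _ + X]big1 ?addr0 => [|t /andP [/eqP t0i tnt0]].
  rewrite /id_tensor ffunE; case: ifP => [_|/negP []]; last first.
    by apply/forallP => k; apply/forallP => l; rewrite !ffunE.
  by rewrite mul1r (@prodv_const _ _ i) // => k; rewrite ffunE.
case: (eqVneq (id_tensor R M N t) 0) => [->|/id_const h]; first by rewrite mul0r.
by move/eqP: tnt0; case; apply/ffunP => k; rewrite ffunE h t0i.
Qed.

Variables (A B : tensor R M N) (s : R).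
Hypothesis hAB : forall t, A t = s * id_tensor R M N t - B t.

Lemma tapplyAB x : tapply A x = s%:C *: vpow M x - tapply B x.
Proof.
apply/rowP => i; rewrite [LHS]tapplyE.
have -> : (s%:C *: vpow M x - tapply B x) 0 i = s%:C * vpow M x 0 i - tapply B x 0 i.
  by rewrite !mxE.
rewrite vpowE tapplyE -(id_sum (fun j => x 0 j) i).
rewrite mulr_sumr -sumrB; apply: eq_bigr => t _.
by rewrite hAB rmorphB rmorphM /= mulrBl mulrA.
Qed.

Lemma eigAB lam x : is_eigenpair A lam x <-> is_eigenpair B (s%:C - lam) x.
Proof.
rewrite /is_eigenpair tapplyAB; split => -[x0 h]; split => //.
  by rewrite scalerBl -h opprB addrC subrK.
by rewrite h scalerBl opprB addrC subrK.
Qed.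

End Tens.


Lemma prod_eq_each (C : numDomainType) (I : finType) (P : pred I) (a b : I -> C) :
  (forall k, P k -> 0 <= a k <= b k) -> (forall k, P k -> 0 < b k) ->
  \prod_(k | P k) a k = \prod_(k | P k) b k -> forall k, P k -> a k = b k.
Proof.
move=> hab hb heq k Pk; apply/eqP; apply: contraT => hne.
have hlt : a k < b k by rewrite lt_neqAle hne; case/andP: (hab k Pk).
move: heq; rewrite (bigD1 k Pk) [X in _ = X](bigD1 k Pk) /=.
set X := \prod_(j | P j && (j != k)) a j; set Y := \prod_(j | P j && (j != k)) b j.
have hXY : X <= Y by apply: ler_prod => j /andP [Pj _]; exact: hab.
have hY : 0 < Y by apply: prodr_gt0 => j /andP [Pj _]; exact: hb.
have ha0 : 0 <= a k by case/andP: (hab k Pk).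
move=> e; have : a k * X < b k * Y.
  by apply: (le_lt_trans (ler_wpM2l ha0 hXY)); rewrite ltr_pM2r.
by rewrite e ltxx.
Qed.

Lemma closed_all (T : finType) (e : rel T) (S : pred T) i :
  (forall x y, S x -> e x y -> S y) -> (forall j, connect e i j) -> S i ->
  forall j, S j.
Proof.
move=> cl conn Si j; case/connectP: (conn j) => p pth ->.
clear conn; elim: p i Si pth => //= a p IH i Si /andP [eia pth].
exact: IH (cl _ _ Si eia) pth.
Qed.

Section Perron.
Variable R : realType.
Local Notation C := R[i].
Variables m n : nat.
Local Notation N := n.+1.
Local Notation M := m.+1.
Variables (A B : tensor R M N) (s : R) (rho : C) (vp : 'rV[C]_N).
Hypothesis hAB : forall t, A t = s * id_tensor R M N t - B t.
Hypothesis B0 : forall t, 0 <= B t.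
Hypothesis wi : weakly_irreducible A.
Hypothesis vpos : forall i, 0 < vp 0 i.
Hypothesis vpe : tapply B vp = rho *: vpow M vp.
Hypothesis rho0 : 0 <= rho.

Lemma eigE (y : 'rV[C]_N) : tapply B y = rho *: vpow M y ->
  forall i, \sum_(t : midx M N | t ord0 == i) (B t)%:C * prodv (fun j => y 0 j) t
     = rho * y 0 i ^+ m.
Proof.
by move=> h i; rewrite -tapplyE h mxE vpowE.
Qed.

Lemma arcB i j : tarc A i j -> exists t : midx M N, exists k : 'I_M,
  [/\ t ord0 = i, val k != 0%N, t k = j & B t != 0].
Proof.
case/andP => ji /existsP [t /and3P [ft At /existsP [k /andP [k0 /eqP tk]]]].
exists t, k; split => //; first by apply/eqP; rewrite -first_isE.
apply: contra At => /eqP Bt; rewrite hAB Bt subr0.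
case: (eqVneq (id_tensor R M N t) 0) => [->|/id_const h]; first by rewrite mulr0.
move: ji; rewrite -tk h; move: ft; rewrite first_isE => /eqP ->.
by rewrite eqxx.
Qed.

Lemma B0C t : 0 <= (B t)%:C.
Proof. by rewrite (@ler0c R). Qed.

Lemma chain (y : 'rV[C]_N) c i : tapply B y = rho *: vpow M y ->
  (forall j, `|y 0 j| <= c * vp 0 j) -> 0 <= c -> `|y 0 i| = c * vp 0 i ->
  `|\sum_(t : midx M N | t ord0 == i) (B t)%:C * prodv (fun j => y 0 j) t| =
     \sum_(t : midx M N | t ord0 == i) `|(B t)%:C * prodv (fun j => y 0 j) t| /\
  forall t : midx M N, t ord0 == i ->
    (B t)%:C * prodv (fun j => `|y 0 j|) t = (B t)%:C * prodv (fun j => c * vp 0 j) t.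
Proof.
move=> ye hle c0 hi.
have hS1 : \sum_(t : midx M N | t ord0 == i) `|(B t)%:C * prodv (fun j => y 0 j) t| =
   \sum_(t : midx M N | t ord0 == i) (B t)%:C * prodv (fun j => `|y 0 j|) t.
  apply: eq_bigr => t _; rewrite normrM ger0_norm ?B0C //.
  by rewrite /prodv normr_prod.
have hterm : forall t : midx M N, t ord0 == i ->
    (B t)%:C * prodv (fun j => `|y 0 j|) t <= (B t)%:C * prodv (fun j => c * vp 0 j) t.
  move=> t _; apply: ler_wpM2l; first exact: B0C.
  apply: ler_prod => k _; rewrite normr_ge0 /=; exact: hle.
have hS2 : \sum_(t : midx M N | t ord0 == i) (B t)%:C * prodv (fun j => c * vp 0 j) t =
    `|\sum_(t : midx M N | t ord0 == i) (B t)%:C * prodv (fun j => y 0 j) t|.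
  rewrite eigE // normrM normrX hi ger0_norm // exprMn.
  under eq_bigr => t _ do rewrite prodvZ mulrCA.
  rewrite -mulr_sumr (eigE vpe) mulrCA; congr (_ * _).

have hle1 := ler_norm_sum (index_enum (midx M N))
   (fun t => (B t)%:C * prodv (fun j => y 0 j) t) (fun t : midx M N => t ord0 == i).
have hle2 : \sum_(t : midx M N | t ord0 == i) (B t)%:C * prodv (fun j => `|y 0 j|) t <=
   \sum_(t : midx M N | t ord0 == i) (B t)%:C * prodv (fun j => c * vp 0 j) t.
  by apply: ler_sum.
rewrite hS1 in hle1 *.
have e1 : \sum_(t : midx M N | t ord0 == i) (B t)%:C * prodv (fun j => `|y 0 j|) t =
   \sum_(t : midx M N | t ord0 == i) (B t)%:C * prodv (fun j => c * vp 0 j) t.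
  by apply/le_anti; rewrite hle2 /= hS2.
split; first by rewrite e1 hS2.
move=> t ti; apply/eqP; rewrite eq_sym -subr_eq0; apply/eqP.
move: t ti; apply: psumr_eq0P => [t ti|]; first by rewrite subr_ge0 hterm.
by rewrite sumrB e1 subrr.
Qed.


Lemma vp_real j : vp 0 j \is Num.real.
Proof. exact: gtr0_real (vpos j). Qed.

Lemma perron1 (y : 'rV[C]_N) : y != 0 -> tapply B y = rho *: vpow M y ->
  exists2 c, 0 < c & forall j, `|y 0 j| = c * vp 0 j.
Proof.
move=> y0 ye.
pose ratio j := `|y 0 j| / vp 0 j.
have rreal j : ratio j \is Num.real.
  by rewrite /ratio rpredM ?normr_real // rpredV vp_real.
have [i0 _ hmax] := @real_arg_maxP _ _ ord0 xpredT ratio isT (fun i _ => rreal i).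
set c := ratio i0 in hmax.
have hle j : `|y 0 j| <= c * vp 0 j.
  by rewrite -ler_pdivrMr ?vpos //; exact: hmax.
have [j yj] : exists j, y 0 j != 0.
  apply/existsP; apply: contraNT y0; rewrite negb_exists => /forallP h.
  by apply/eqP/rowP => j; rewrite mxE; apply/eqP; move: (h j); rewrite negbK.
have c0 : 0 < c.
  apply: (@lt_le_trans _ _ (ratio j)); last exact: hmax.
  by rewrite /ratio divr_gt0 ?normr_gt0 ?vpos.
exists c => //.
pose S := fun j => `|y 0 j| == c * vp 0 j.
have Si0 : S i0 by rewrite /S /c /ratio divfK // gt_eqF ?vpos.
have cl : forall x z, S x -> tarc A x z -> S z.
  move=> x z /eqP Sx /arcB [t [k [tx k0 tk Bt]]].
  have [_ /(_ t)] := chain ye hle (ltW c0) Sx.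
  have BtC : (B t)%:C != 0 :> C by apply: contra Bt => /eqP [] ->.
  rewrite tx eqxx => /(_ isT) /(mulfI BtC) hp.
  rewrite /S -tk; apply/eqP.
  apply: (@prod_eq_each _ _ (fun k : 'I_M => val k != 0%N)
     (fun k => `|y 0 (t k)|) (fun k => c * vp 0 (t k))) => //.
    by move=> l _; rewrite normr_ge0 hle.
  by move=> l _; rewrite mulr_gt0 ?vpos.
by move=> j'; apply/eqP; apply: (closed_all cl (wi i0) Si0).
Qed.

Lemma perron2 (y : 'rV[C]_N) : y != 0 -> tapply B y = rho *: vpow M y ->
  forall t : midx M N, B t != 0 ->
  prodv (fun j => y 0 j / `|y 0 j|) t = (y 0 (t ord0) / `|y 0 (t ord0)|) ^+ m.
Proof.
move=> y0 ye t Bt.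
have [c c0 hc] := perron1 y0 ye.
set i := t ord0.
have hle j : `|y 0 j| <= c * vp 0 j by rewrite hc.
have [hsum _] := chain ye hle (ltW c0) (hc i).
have [tau _ htau] := normC_sum_eq hsum.
have hS := eigE ye i.
have hnS : \sum_(t0 : midx M N | t0 ord0 == i) `|(B t0)%:C * prodv (fun j => y 0 j) t0| =
    rho * `|y 0 i| ^+ m.
  by rewrite -hsum hS normrM normrX ger0_norm.
have hS' : rho * y 0 i ^+ m = rho * `|y 0 i| ^+ m * tau.
  rewrite -hS -hnS mulr_suml; apply: eq_bigr => t0 ht0; exact: htau.
have BtC : (B t)%:C != 0 :> C by apply: contra Bt => /eqP [] ->.
have Bpos : 0 < (B t)%:C by rewrite lt_def BtC B0C.
have rhon : rho != 0.
  have : 0 < rho * vp 0 i ^+ m.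
    rewrite -(eigE vpe) (bigD1 t) //=.
    apply: (@lt_le_trans _ _ ((B t)%:C * prodv (fun j => vp 0 j) t)).
      by rewrite mulr_gt0 // prodr_gt0 // => k _; exact: vpos.
    rewrite lerDl; apply: sumr_ge0 => t0 _; rewrite mulr_ge0 ?B0C //.
    by apply: prodr_ge0 => k _; rewrite ltW ?vpos.
  by apply: contraTneq => ->; rewrite mul0r ltxx.
have nyi : `|y 0 i| != 0 by rewrite hc mulf_neq0 ?gt_eqF ?vpos.
have htau' : tau = (y 0 i / `|y 0 i|) ^+ m.
  rewrite -mulrA in hS'; move/(mulfI rhon): hS' => hS'.
  by rewrite expr_div_n hS' mulrC mulKf // expf_neq0.
have hP := htau t (eqxx _).
rewrite normrM ger0_norm ?B0C // -mulrA in hP.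
move/(mulfI BtC): hP => hP.
rewrite /prodv prodf_div -/(prodv _ t) hP -htau'.
have -> : \prod_(k : 'I_M | val k != 0%N) `|y 0 (t k)| = `|prodv (fun j => y 0 j) t|.
  by rewrite /prodv normr_prod.
rewrite mulrC mulKf //.
rewrite /prodv normr_prod; apply/prodf_neq0 => k _.
by rewrite hc mulf_neq0 ?gt_eqF ?vpos.
Qed.
End Perron.


Section Good.
Variable R : realType.
Local Notation C := R[i].
Variables m n : nat.
Local Notation N := n.+1.
Local Notation M := m.+1.
Variables (A B : tensor R M N) (s : R) (rho : C) (vp : 'rV[C]_N).
Hypothesis hAB : forall t, A t = s * id_tensor R M N t - B t.
Hypothesis B0 : forall t, 0 <= B t.
Hypothesis wi : weakly_irreducible A.
Hypothesis vpos : forall i, 0 < vp 0 i.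
Hypothesis vpe : tapply B vp = rho *: vpow M vp.
Hypothesis rho0 : 0 <= rho.
Hypothesis vp1 : vp 0 0 = 1.

Definition good (d : 'I_N -> C) :=
  forall t : midx M N, A t != 0 -> d (t ord0) ^+ m = prodv d t.

Lemma goodB d : good d -> forall t : midx M N, B t != 0 -> prodv d t = d (t ord0) ^+ m.
Proof.
move=> gd t Bt.
case: (eqVneq (id_tensor R M N t) 0) => [h|/id_const h].
  by rewrite gd // hAB h mulr0 sub0r oppr_eq0.
exact: prodv_const.
Qed.

Lemma good_eig y : y != 0 -> tapply B y = rho *: vpow M y ->
  good (fun j => y 0 j / `|y 0 j|).
Proof.
move=> y0 ye t At.
case: (eqVneq (B t) 0) => [Bt|Bt]; last by rewrite (perron2 hAB B0 wi vpos vpe rho0 y0 ye Bt).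
have : id_tensor R M N t != 0 by move: At; rewrite hAB Bt subr0; apply: contra => /eqP ->; rewrite mulr0.
by move/id_const => h; rewrite (prodv_const _ h).
Qed.

Lemma goodM d e : good d -> good e -> good (fun j => d j * e j).
Proof. by move=> gd ge t At; rewrite prodvM exprMn gd ?ge. Qed.

Lemma goodV d e : good d -> good e -> good (fun j => d j / e j).
Proof.
by move=> gd ge t At; rewrite /prodv prodf_div -!/(prodv _ t) expr_div_n gd ?ge.
Qed.

Lemma diag_ii (d : 'I_N -> C) i : (diag_mx (\row_j d j)) i i = d i.
Proof. by rewrite !mxE eqxx mulr1n. Qed.

Lemma tdiag_good (d : 'I_N -> C) : (forall j, d j != 0) ->
  [ffun t => (A t)%:C] = tdiag_sim A (diag_mx (\row_j d j)) <-> good d.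
Proof.
move=> dn0.
have E t : tdiag_sim A (diag_mx (\row_j d j)) t =
    (d (t ord0))^-1 ^+ m * (A t)%:C * prodv d t.
  rewrite ffunE (bigD1 (t ord0)) //=.
  rewrite first_isE eqxx [X in _ + X]big1 ?addr0 => [|i /negPf ni]; last first.
    by rewrite first_isE eq_sym ni.
  rewrite diag_ii exprVn; congr (_ * _).
  by apply: eq_bigr => k _; rewrite diag_ii.
have AC t : ((A t)%:C == 0 :> C) = (A t == 0).
  by apply/eqP/eqP => [[]|->].
split => [/ffunP h t At|gd].
  have := h t; rewrite ffunE E => e.
  have AtC : (A t)%:C != 0 :> C by rewrite AC.
  move: e; rewrite mulrAC => e.
  have : ((d (t ord0))^-1 ^+ m * prodv d t - 1) * (A t)%:C = 0.
    by rewrite mulrBl -e mul1r subrr.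
  move/eqP; rewrite mulf_eq0 (negPf AtC) orbF subr_eq0 exprVn => /eqP h'.
  have xn : d (t ord0) ^+ m != 0 by rewrite expf_neq0.
  apply: (mulfI (invr_neq0 xn)); by rewrite mulVf // h'.
apply/ffunP => t; rewrite ffunE E.
case: (eqVneq (A t) 0) => [->|At]; first by rewrite mulr0 mul0r.
by rewrite -gd // mulrAC exprVn mulVf ?mul1r // expf_neq0.
Qed.

Lemma diag_of (D : 'M[C]_N) : is_diag_mx D -> D = diag_mx (\row_j D j j).
Proof.
move/is_diag_mxP => h; apply/matrixP => i j; rewrite !mxE.
case: (eqVneq i j) => [->|ij]; first by rewrite mulr1n.
by rewrite mulr0n h.
Qed.

Lemma unit_diag (d : 'I_N -> C) : (forall j, d j != 0) -> diag_mx (\row_j d j) \in unitmx.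
Proof.
move=> h; rewrite unitmxE det_diag unitfE; apply/prodf_neq0 => j _.
by rewrite mxE.
Qed.

Lemma diag_unit_nz (d : 'I_N -> C) : diag_mx (\row_j d j) \in unitmx -> forall j, d j != 0.
Proof.
rewrite unitmxE det_diag unitfE => /prodf_neq0 h j.
by have := h j isT; rewrite mxE.
Qed.

Definition vrow (d : 'I_N -> C) : 'rV[C]_N := \row_j (d j * vp 0 j).

Lemma vrow_eig d : good d -> tapply B (vrow d) = rho *: vpow M (vrow d).
Proof.
move=> gd; apply/rowP => i; rewrite tapplyE.
have -> : (rho *: vpow M (vrow d)) 0 i = rho * (d i * vp 0 i) ^+ m by rewrite !mxE.
rewrite exprMn mulrCA -(eigE vpe) mulr_sumr; apply: eq_bigr => t /eqP ti.
have -> : (fun j => vrow d 0 j) = (fun j => d j * vp 0 j).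
  by apply: funext => j; rewrite mxE.
rewrite prodvM mulrCA.
case: (eqVneq (B t) 0) => [->|Bt]; first by rewrite rmorph0 !(mul0r, mulr0).
by rewrite goodB // ti.
Qed.

Lemma vrow_nz d : d ord0 != 0 -> vrow d != 0.
Proof.
move=> d0; apply: contra d0 => /eqP /rowP /(_ ord0); rewrite !mxE => /eqP.
by rewrite mulf_eq0 => /orP [//|]; rewrite gt_eqF ?vpos.
Qed.

Lemma good_norm1 d : good d -> d ord0 = 1 -> forall j, `|d j| = 1.
Proof.
move=> gd d0 j.
have d0' : d ord0 != 0 by rewrite d0 oner_eq0.
have [c c0 hc] := perron1 hAB B0 wi vpos vpe rho0 (vrow_nz d0') (vrow_eig gd).
have h0 := hc ord0; rewrite mxE d0 mul1r vp1 mulr1 normr1 in h0.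
have := hc j; rewrite mxE normrM -h0 mul1r (gtr0_norm (vpos j)) => /eqP.
rewrite -subr_eq0 -{2}(mul1r (vp 0 j)) -mulrBl mulf_eq0 => /orP [|]; first by rewrite subr_eq0 => /eqP.
by rewrite gt_eqF ?vpos.
Qed.

End Good.


Section Fin.
Variable R : realType.
Local Notation C := R[i].
Local Notation re := (@complex.Re R).
Local Notation im := (@complex.Im R).
Variables m n : nat.
Local Notation N := n.+1.
Local Notation M := m.+1.
Variables (A B : tensor R M N) (s : R) (rho : C) (vp : 'rV[C]_N).
Hypothesis hAB : forall t, A t = s * id_tensor R M N t - B t.
Hypothesis B0 : forall t, 0 <= B t.
Hypothesis wi : weakly_irreducible A.
Hypothesis vpos : forall i, 0 < vp 0 i.
Hypothesis vpe : tapply B vp = rho *: vpow M vp.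
Hypothesis rho0 : 0 <= rho.
Hypothesis vp1 : vp 0 0 = 1.

Lemma reC (z w : C) : re (z * conjc w) = re z * re w + im z * im w /\
  im (z * conjc w) = im z * re w - re z * im w.
Proof. by case: z => a b; case: w => c d /=; split; ring. Qed.

Lemma conjre (w : C) : re (conjc w) = re w /\ im (conjc w) = - im w.
Proof. by case: w. Qed.

Lemma unitconj (w : C) : re w ^+ 2 + im w ^+ 2 = 1 -> w * conjc w = 1.
Proof.
move=> h; have [h1 h2] := reC w w; apply: Ceq; rewrite ?h1 ?h2 /=.
  by rewrite -h; ring.
by ring.
Qed.

Definition eta : R := (4 ^+ m.+3)^-1.

Lemma iso (e : 'I_N -> C) : good A e -> e ord0 = 1 ->
  (forall j, re (e j) ^+ 2 + im (e j) ^+ 2 = 1) -> (forall j, 1 - re (e j) <= eta) ->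
  forall j, e j = 1.
Proof.
move=> ge e0 eu ec.
have e4 : 0 < 4 ^+ m.+3 :> R by rewrite exprn_gt0.
have eta0 : 0 < eta by rewrite /eta invr_gt0.
have eta1 : eta * 4 ^+ m.+3 = 1 by rewrite /eta mulVf // gt_eqF.
have reP j : 0 < re (e j).
  have h4 : 4 <= 4 ^+ m.+3 :> R.
    by rewrite -[X in X <= _]expr1 ler_eXn2l // ltr1n.
  have : eta <= 1 / 4 by nra.
  have := ec j; lra.
have [i1 _ hmax] := @real_arg_maxP R 'I_N ord0 xpredT (fun j => im (e j)) isT
   (fun i _ => num_real _).
set w := e i1 in hmax.
pose S := fun j => e j == w.
have cl : forall x z, S x -> tarc A x z -> S z.
  move=> x z /eqP Sx /(arcB hAB) [t [k [tx k0 tk Bt]]].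
  have pe := goodB hAB ge Bt; rewrite tx Sx in pe.
  pose u := fun k => e (t k) * conjc w.
  have su : forall l, @sect R (4 * eta) (u l).
    move=> l; rewrite /sect /u; have [-> ->] := reC (e (t l)) w.
    have u1 := eu (t l); have u2 : re w ^+ 2 + im w ^+ 2 = 1 by exact: eu.
    have c1 := ec (t l); have c2 : 1 - re w <= eta by exact: ec.
    have r1 := reP (t l); have r2 : 0 < re w by exact: reP.
    have hm : im (e (t l)) <= im w by exact: hmax.
    split; first by rewrite -u1; move: u1 u2; nra.
    split; first by have := @mono R _ _ _ _ u2 u1 r2 r1 hm; lra.
    have := @cpu _ (re (e (t l))) (im (e (t l))) (re w) (- im w) u1.
    rewrite sqrrN => /(_ u2); lra.
  have hprod : \prod_(l : 'I_M | val l != 0%N) u l = 1.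
    rewrite big_split /= prodr_const card_nz -/(prodv e t) pe -exprMn.
    by rewrite unitconj ?expr1n //; exact: eu.
  rewrite -big_filter in hprod.
  have hsz : size [seq l <- index_enum 'I_M | val l != 0%N] = m.
    by rewrite deprecated_filter_index_enum -cardE card_nz.
  have hs : 4 ^+ (size [seq l <- index_enum 'I_M | val l != 0%N]).+1 * (4 * eta) <= 1.
    rewrite hsz mulrCA mulrA -exprS -[X in _ <= X]eta1 mulrC ler_pM2l //.
    by rewrite ler_eXn2l // ltr1n.
  have kin : k \in [seq l <- index_enum 'I_M | val l != 0%N].
    by rewrite mem_filter k0 mem_index_enum.
  have h0 : 0 <= 4 * eta by apply: ltW; rewrite mulr_gt0.
  have := @prod_sect_one _ _ _ u (4 * eta) h0 su hs hprod k kin.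
  rewrite /u tk => h; rewrite /S; apply/eqP.
  have wu : conjc w * w = 1 by rewrite mulrC unitconj //; exact: eu.
  by rewrite -[e z]mulr1 -wu mulrA h mul1r.
have allS := closed_all cl (wi i1) (eqxx _).
move=> j; have /eqP -> := allS j; have /eqP <- := allS ord0; exact: e0.
Qed.


Definition Kn : nat := 4 ^ m.+3.
Lemma KnE : (Kn%:R : R) = 4 ^+ m.+3. Proof. by rewrite /Kn natrX. Qed.
Lemma etaK : eta * Kn%:R = 1.
Proof. by rewrite KnE /eta mulVf // gt_eqF // exprn_gt0. Qed.
Lemma Kn1 : 1 <= (Kn%:R : R).
Proof. by rewrite KnE exprn_ege1 // ler1n. Qed.

Definition keyr (x : R) : 'I_(2 * Kn).+1 := inord (Num.trunc ((x + 1) * Kn%:R)).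

Lemma keyr_close x y : -1 <= x <= 1 -> -1 <= y <= 1 -> keyr x = keyr y ->
  ((x - y) * Kn%:R) ^+ 2 < 1.
Proof.
move=> /andP [x1 x2] /andP [y1 y2] /(congr1 (@nat_of_ord _)).
have K1 := Kn1.
have tb (z : R) : -1 <= z <= 1 -> (Num.trunc ((z + 1) * Kn%:R) < (2 * Kn).+1)%N.
  case/andP=> z1 z2; rewrite ltnS.
  have e1 : (Num.trunc ((z + 1) * Kn%:R) <= 2 * Kn)%N =
    ((z + 1) * Kn%:R < (2 * Kn).+1%:R) := truncn_le_nat _ _.
  rewrite e1 -natr1 natrM.
  have : (z + 1) * Kn%:R <= 2%:R * Kn%:R by rewrite ler_pM2r ?(lt_le_trans ltr01) //; lra.
  lra.
rewrite /keyr !inordK ?tb ?x1 ?x2 ?y1 ?y2 //.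
have tl (z : R) : 0 <= z -> (Num.trunc z)%:R <= z.
  move=> z0; have e2 : ((Num.trunc z)%:R <= z) = (0 <= z) := truncn_le _.
  by rewrite e2.
have tg (z : R) : z < (Num.trunc z).+1%:R := truncnS_gt _.
move=> e.
have a0 : 0 <= (x + 1) * Kn%:R by rewrite mulr_ge0 //; lra.
have b0 : 0 <= (y + 1) * Kn%:R by rewrite mulr_ge0 //; lra.
have ha := tl _ a0; have hb := tl _ b0.
have ha' := tg ((x + 1) * Kn%:R); have hb' := tg ((y + 1) * Kn%:R).
rewrite e in ha ha'; rewrite -!natr1 in ha' hb'.
have : -1 < (x - y) * Kn%:R < 1.
  apply/andP; split; nra.
case/andP => l1 l2; nra.
Qed.

Definition key (D : 'M[C]_N) : {ffun 'I_N -> 'I_(2 * Kn).+1 * 'I_(2 * Kn).+1} :=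
  [ffun j => (keyr (re (D j j)), keyr (im (D j j)))].

Lemma norm1_comp (z : C) : `|z| = 1 -> re z ^+ 2 + im z ^+ 2 = 1.
Proof. by move=> h; have := @add_Re2_Im2 R z; rewrite h expr1n => -[]. Qed.


Lemma Dzero_info D : Dzero A D -> [/\ D = diag_mx (\row_j D j j), forall j, D j j != 0,
  good A (fun j => D j j), D ord0 ord0 = 1 & forall j, `|D j j| = 1].
Proof.
case => dg un d00 sim.
have eD := diag_of dg.
have nz : forall j, D j j != 0 by apply: diag_unit_nz; rewrite -eD.
have gd : good A (fun j => D j j) by apply/(tdiag_good A nz); rewrite -eD.
split => //.
exact: (good_norm1 hAB B0 wi vpos vpe rho0 vp1 gd d00).
Qed.

Lemma key_inj D D' : Dzero A D -> Dzero A D' -> key D = key D' -> D = D'.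
Proof.
move=> /Dzero_info [eD nz gd d0 n1] /Dzero_info [eD' nz' gd' d0' n1'] ek.
pose e := fun j => D j j / D' j j.
have ge : good A e by exact: goodV.
have inv j : (D' j j)^-1 = conjc (D' j j).
  by rewrite invc_norm n1' expr1n invr1 mul1r.
have e0 : e ord0 = 1 by rewrite /e d0 d0' divr1.
have comp j : [/\ re (e j) = re (D j j) * re (D' j j) + im (D j j) * im (D' j j),
    im (e j) = im (D j j) * re (D' j j) - re (D j j) * im (D' j j),
    re (D j j) ^+ 2 + im (D j j) ^+ 2 = 1 &
    re (D' j j) ^+ 2 + im (D' j j) ^+ 2 = 1].
  by rewrite /e inv; have [-> ->] := reC (D j j) (D' j j); split => //; apply: norm1_comp.
have eu j : re (e j) ^+ 2 + im (e j) ^+ 2 = 1.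
  have [-> -> u1 u2] := comp j.
  have -> : forall a b c d : R, (a * c + b * d) ^+ 2 + (b * c - a * d) ^+ 2 =
    (a ^+ 2 + b ^+ 2) * (c ^+ 2 + d ^+ 2) by move=> a b c d; ring.
  by rewrite u1 u2 mulr1.
have ec j : 1 - re (e j) <= eta.
  have [-> _ u1 u2] := comp j.
  have := ek; move/ffunP/(_ j); rewrite !ffunE => -[k1 k2].
  have r1 : forall a b : R, a ^+ 2 + b ^+ 2 = 1 -> -1 <= a <= 1.
    by move=> a b h; apply/andP; split; nra.
  have c1 := keyr_close (r1 _ _ u1) (r1 _ _ u2) k1.
  have u1' : im (D j j) ^+ 2 + re (D j j) ^+ 2 = 1 by rewrite addrC.
  have u2' : im (D' j j) ^+ 2 + re (D' j j) ^+ 2 = 1 by rewrite addrC.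
  have c2 := keyr_close (r1 _ _ u1') (r1 _ _ u2') k2.
  have K1 := Kn1; have eK := etaK.
  set a := re (D j j) in u1 c1 u1' *; set b := im (D j j) in u1 c2 u1' *.
  set c := re (D' j j) in u2 c1 u2' *; set d := im (D' j j) in u2 c2 u2' *.
  set K := (Kn%:R : R) in c1 c2 K1 eK.
  have hS : (a - c) ^+ 2 + (b - d) ^+ 2 = 2 * (1 - (a * c + b * d)) by nra.
  have : ((a - c) ^+ 2 + (b - d) ^+ 2) * K < 2.
    have sq1 := sqr_ge0 (a - c); have sq2 := sqr_ge0 (b - d).
    move: c1 c2; rewrite !exprMn => c1 c2.
    have : K <= K ^+ 2 by rewrite expr2 ler_peMl // (le_trans ler01).
    nra.
  rewrite hS => h; apply: ltW; have eta0 : 0 < eta by rewrite /eta invr_gt0 exprn_gt0.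
  nra.
have e1 := iso ge e0 eu ec.
rewrite eD eD'; congr diag_mx; apply/rowP => j; rewrite !mxE.
have := e1 j; rewrite /e => h.
by rewrite -[D j j](divfK (nz' j)) h mul1r.
Qed.

Lemma Dzero_finite : finite_set (Dzero A).
Proof.
pose g (k : {ffun 'I_N -> 'I_(2 * Kn).+1 * 'I_(2 * Kn).+1}) : 'M[C]_N :=
  xget 0 [set D | Dzero A D /\ key D = k].
apply: (@sub_finite_set _ _ (g @` setT)); last exact: finite_image.
move=> D DD; exists (key D) => //.
have [] : [set D0 | Dzero A D0 /\ key D0 = key D] (g (key D)).
  by rewrite /g; apply: (@xgetI _ 0 _ D); split.
by move=> Dg kg; apply: key_inj.
Qed.

End Fin.


Section Grp.
Variable R : realType.
Local Notation C := R[i].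
Variables m n : nat.
Local Notation N := n.+1.
Local Notation M := m.+1.
Variables (A B : tensor R M N) (s : R) (rho : C) (vp : 'rV[C]_N).
Hypothesis hAB : forall t, A t = s * id_tensor R M N t - B t.
Hypothesis B0 : forall t, 0 <= B t.
Hypothesis wi : weakly_irreducible A.
Hypothesis vpos : forall i, 0 < vp 0 i.
Hypothesis vpe : tapply B vp = rho *: vpow M vp.
Hypothesis rho0 : 0 <= rho.
Hypothesis vp1 : vp 0 0 = 1.

Local Notation eigB := (is_eigenpair B rho).

Lemma prodv_ext (x z : 'I_N -> C) (t : midx M N) : (forall j, x j = z j) ->
  prodv x t = prodv z t.
Proof. by move=> h; apply: eq_bigr => k _; rewrite h. Qed.

Lemma tapplyZ (c : C) (y : 'rV[C]_N) : tapply B (c *: y) = c ^+ m *: tapply B y.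
Proof.
apply/rowP => i; rewrite tapplyE [RHS]mxE tapplyE mulr_sumr; apply: eq_bigr => t _.
rewrite (@prodv_ext _ (fun j => c * y 0 j)); last by move=> j /=; rewrite mxE.
by rewrite prodvZ mulrCA.
Qed.

Lemma vpowZ (c : C) (y : 'rV[C]_N) : vpow M (c *: y) = c ^+ m *: vpow M y.
Proof. by apply/rowP => i; rewrite !mxE exprMn. Qed.

Lemma eigZ (c : C) y : eigB y -> c != 0 -> eigB (c *: y).
Proof.
case=> y0 ye c0; split; first by rewrite scaler_eq0 negb_or c0.
by rewrite tapplyZ vpowZ ye !scalerA mulrC.
Qed.

Lemma eig_abs y : eigB y -> exists2 c, 0 < c & forall j, `|y 0 j| = c * vp 0 j.
Proof. by case=> y0 ye; exact: (perron1 hAB B0 wi vpos vpe rho0 y0 ye). Qed.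

Lemma eig_nz y : eigB y -> forall j, y 0 j != 0.
Proof.
move=> /eig_abs [c c0 hc] j; rewrite -normr_eq0 hc.
by rewrite mulf_neq0 ?gt_eqF ?vpos.
Qed.

Definition normalize (y : 'rV[C]_N) := (y 0 0)^-1 *: y.

Lemma normalize_prop y : eigB y ->
  [/\ eigB (normalize y), normalize y 0 0 = 1 & forall j, `|normalize y 0 j| = vp 0 j].
Proof.
move=> ey; have y0 := eig_nz ey 0.
have en : eigB (normalize y) by apply: eigZ; rewrite // invr_eq0.
have n1 : normalize y 0 0 = 1 by rewrite /normalize mxE mulVf.
split => //.
have [c c0 hc] := eig_abs en.
have := hc 0; rewrite n1 normr1 vp1 mulr1 => c1 j.
by rewrite hc -c1 mul1r.
Qed.

Lemma normalizeZ (c : C) y : c != 0 -> normalize (c *: y) = normalize y.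
Proof.
by move=> c0; rewrite /normalize scalerA mxE invfM mulrAC mulVf // mul1r.
Qed.

Lemma normalize1 (y : 'rV[C]_N) : y 0 0 = 1 -> normalize y = y.
Proof. by move=> h; rewrite /normalize h invr1 scale1r. Qed.

Lemma pclass_self (y : 'rV[C]_N) : pclass y y.
Proof. by exists 1; rewrite oner_eq0 scale1r. Qed.

Lemma pclass_eq (y w : 'rV[C]_N) : pclass y w -> pclass w = pclass y.
Proof.
case=> c [c0 ->]; apply/seteqP; split => z [d [d0 ->]].
  by exists (d * c); rewrite mulf_neq0 // scalerA.
exists (d / c); rewrite mulf_neq0 ?invr_eq0 //; split => //.
by rewrite scalerA divfK.
Qed.

Definition phi (P : set 'rV[C]_N) : 'M[C]_N := Dvec (normalize (xget 0 P)).

Lemma phiE x : eigB x -> phi (pclass x) = Dvec (normalize x).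
Proof.
move=> ex; rewrite /phi.
have : pclass x (xget 0 (pclass x)) by apply: (@xgetI _ 0 _ x); exact: pclass_self.
by case=> c [c0 ->]; rewrite normalizeZ.
Qed.

Lemma Dvec_in z : eigB z -> z 0 0 = 1 -> Dzero A (Dvec z).
Proof.
move=> ez z1.
have nz j : z 0 j / `|z 0 j| != 0.
  by rewrite mulf_neq0 ?invr_eq0 ?normr_eq0 ?(eig_nz ez).
split.
- exact: diag_mx_is_diag.
- exact: unit_diag.
- by rewrite /Dvec (diag_ii (fun j => z 0 j / `|z 0 j|)) z1 normr1 divr1.
- case: ez => z0 ze.
  by apply/(tdiag_good A nz); exact: (good_eig hAB B0 wi vpos vpe rho0 z0 ze).
Qed.

Lemma vrow_prop d : good A d -> d ord0 = 1 ->
  [/\ eigB (vrow vp d), vrow vp d 0 0 = 1 & Dvec (vrow vp d) = diag_mx (\row_j d j)].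
Proof.
move=> gd d0.
have n1 := good_norm1 hAB B0 wi vpos vpe rho0 vp1 gd d0.
split.
- split; last exact: vrow_eig.
  by apply: vrow_nz; rewrite // d0 oner_eq0.
- by rewrite mxE d0 mul1r.
- rewrite /Dvec; congr diag_mx; apply/rowP => j; rewrite !mxE normrM n1 mul1r.
  by rewrite (gtr0_norm (vpos j)) mulfK // gt_eqF ?vpos.
Qed.

Lemma qh_vrow g : (diag_mx (\row_j g j) *m vp^T)^T = vrow vp g.
Proof. by rewrite mul_diag_mx; apply/rowP => j; rewrite !mxE. Qed.

End Grp.

Unset Implicit Arguments. Set Strict Implicit.


Theorem lemma3p2 (R : realType) (m n : nat) (A B : tensor R m n.+1) (s : R)
    (lam rho : R[i]) (vp : 'rV[R[i]]_n.+1) :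
  (2 <= m)%N ->
  0 < s ->
  (forall t, 0 <= B t) ->
  (forall t, A t = s * id_tensor R m n.+1 t - B t) ->
  weakly_irreducible A ->
  is_least_H_eigenvalue A lam ->
  is_spectral_radius B rho ->
  (forall i, 0 < vp 0 i) -> vp 0 0 = 1 -> tapply B vp = rho *: vpow m vp ->
  [/\ finite_set (PV A lam),
      (forall P, PV A lam P -> exists2 y, P y & y 0 0 = 1),
      (exists phi : set 'rV[R[i]]_n.+1 -> 'M[R[i]]_n.+1,
         set_bij (PV A lam) (Dzero A) phi /\
         forall (P Q : set 'rV[R[i]]_n.+1) (y z : 'rV[R[i]]_n.+1),
           PV A lam P -> PV A lam Q -> P y -> Q z -> y 0 0 = 1 -> z 0 0 = 1 ->
           PV A lam (pclass (qhprod vp y z)) /\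
           phi (pclass (qhprod vp y z)) = phi P *m phi Q)
    & (Dzero A #= PV A lam)%card].
Proof.
case: m A B => [|m] A B; first by [].
move=> hm s0 B0 hAB wi [[x [ex xreal]] lmin] [[mu [[xm emu] nmu]] rmax] vpos vp1 vpe.
have rho0 : 0 <= rho by rewrite -nmu normr_ge0.
have vpn : vp != 0.
  apply/eqP => h; move: vp1; rewrite h mxE => /eqP; by rewrite eq_sym oner_eq0.
have evpA : is_eigenpair A (s%:C - rho) vp.
  by apply/(eigAB hAB); rewrite subKr; split.
have l1 : lam <= s%:C - rho.
  apply: lmin; exists vp; split => // i; exact: gtr0_real (vpos i).
have l2 : `|s%:C - lam| <= rho.
  by apply: rmax; exists x; apply/(eigAB hAB).
have l3 : rho <= s%:C - lam by rewrite lerBrDr addrC -lerBrDr.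
have rhoE : s%:C - lam = rho.
  apply/le_anti; rewrite l3 andbT.
  by rewrite -(ger0_norm (le_trans rho0 l3)).
have PVE : PV A lam = PV B rho.
  rewrite /PV; congr (_ @` _); apply/seteqP; split => y /= h.
    by have := (eigAB hAB lam y).1 h; rewrite rhoE.
  by apply/(eigAB hAB); rewrite rhoE.
rewrite PVE.
have hfun : forall P, PV B rho P -> Dzero A (phi P).
  move=> P [y ey <-]; rewrite (phiE ey).
  have [en n1 _] := normalize_prop hAB B0 wi vpos vpe rho0 vp1 ey.
  exact: (Dvec_in hAB B0 wi vpos vpe rho0 en n1).
have hinj : {in PV B rho &, injective (@phi R n)}.
  move=> P Q; rewrite !inE => -[y ey <-] [z ez <-]; rewrite (phiE ey) (phiE ez).
  have [en n1 a1] := normalize_prop hAB B0 wi vpos vpe rho0 vp1 ey.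
  have [en' n1' a1'] := normalize_prop hAB B0 wi vpos vpe rho0 vp1 ez.
  move=> eD.
  have ee : normalize y = normalize z.
    apply/rowP => j; have := congr1 (fun D : 'M__ => D j j) eD.
    rewrite /Dvec !diag_ii a1 a1' => h.
    have vn : vp 0 j != 0 by rewrite gt_eqF ?vpos.
    by rewrite -[LHS](divfK vn) h divfK.
  have py : pclass y (normalize y).
    by exists ((y 0 0)^-1); rewrite invr_eq0 (eig_nz hAB B0 wi vpos vpe rho0 ey).
  have pz : pclass z (normalize z).
    by exists ((z 0 0)^-1); rewrite invr_eq0 (eig_nz hAB B0 wi vpos vpe rho0 ez).
  by rewrite -(pclass_eq py) -(pclass_eq pz) ee.
have hsurj : Dzero A `<=` (@phi R n) @` PV B rho.
  move=> D hD.
  have [eD nz gd d0 n1] := Dzero_info hAB B0 wi vpos vpe rho0 vp1 hD.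
  have [ev v1 dv] := vrow_prop hAB B0 wi vpos vpe rho0 vp1 gd d0.
  exists (pclass (vrow vp (fun j => D j j))); first by exists (vrow vp (fun j => D j j)).
  by rewrite (phiE ev) normalize1 // dv -eD.
have himg : Dzero A = (@phi R n) @` PV B rho.
  apply/seteqP; split => // D [P hP <-]; exact: hfun.
have hcard : (Dzero A #= PV B rho)%card by rewrite himg; exact: inj_card_eq.
split => //.
- rewrite -(eq_finite_set hcard).
  exact: (Dzero_finite hAB B0 wi vpos vpe rho0 vp1).
- move=> P [y ey <-]; exists (normalize y).
    by exists ((y 0 0)^-1); rewrite invr_eq0 (eig_nz hAB B0 wi vpos vpe rho0 ey).
  by have [] := normalize_prop hAB B0 wi vpos vpe rho0 vp1 ey.
- exists (@phi R n); split; first by split.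
  move=> P Q y z [x1 ex1 <-] [x2 ex2 <-] Py Qz y1 z1.
  have ey : is_eigenpair B rho y by case: Py => c [c0 ->]; exact: eigZ.
  have ez : is_eigenpair B rho z by case: Qz => c [c0 ->]; exact: eigZ.
  rewrite -(pclass_eq Py) -(pclass_eq Qz) (phiE ey) (phiE ez) !normalize1 //.
  pose g := fun j => (y 0 j / `|y 0 j|) * (z 0 j / `|z 0 j|).
  have gg : good A g.
    case: ey => y0 ye; case: ez => z0 ze.
    apply: goodM; [exact: (good_eig hAB B0 wi vpos vpe rho0 y0 ye)
                  |exact: (good_eig hAB B0 wi vpos vpe rho0 z0 ze)].
  have g0 : g ord0 = 1 by rewrite /g y1 z1 normr1 divr1 mulr1.
  have hD : Dvec y *m Dvec z = diag_mx (\row_j g j).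
    by rewrite /Dvec mulmx_diag; congr diag_mx; apply/rowP => j; rewrite !mxE.
  have hq : qhprod vp y z = vrow vp g by rewrite /qhprod hD qh_vrow.
  have [ev v1 dv] := vrow_prop hAB B0 wi vpos vpe rho0 vp1 gg g0.
  rewrite hq; split; first by exists (vrow vp g).
  by rewrite (phiE ev) normalize1 // dv hD.
Qed.
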